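(* Let $q$ be a prime power, $m\ge 2$, $1\le k<n$, and let $0<s<m$ with $\gcd(s,m)=1$. Then: (1) For $A \in \mathbb{F}_{q^m}^{k\times (n-k)}$, there exists $X \in \mathbb{F}_{q^m}^{k\times (n-k)}$ with $\varPhi_s(X)=A$ if and only if $A\in\mathcal K$. (2) If $A \in \mathcal R_1$, then $|\varPhi_s^{-1}(A)|=0$ if $A\notin \mathcal K$, and $|\varPhi_s^{-1}(A)|=q^{k(n-k)}$ if $A\in \mathcal K$. (3) $\mathcal G(s)=\varPhi_s^{-1}(\mathcal R_1^*\cap \mathcal K)$, and $|\mathcal G(1)|=|\mathcal G(s)|=q^{k(n-k)}|\mathcal R_1^*\cap \mathcal K|$.
   Context: $\mathrm{Tr}_{\mathbb{F}_{q^m}/\mathbb{F}_q}(\alpha)=\sum_{i=0}^{m-1}\alpha^{q^i}$. $\varPhi_s:\mathbb{F}_{q^m}^{k\times (n-k)}\to\mathbb{F}_{q^m}^{k\times (n-k)}$, $X\mapsto X^{(q^s)}-X$, where $X^{(q^s)}$ raises each entry to the $q^s$-th power. $\mathcal R_1:=\{A\in \mathbb{F}_{q^m}^{k\times (n-k)} \mid \mathrm{rk}(A)=1\}$, $\mathcal R_1^*:=\{A\in (\mathbb{F}_{q^m}^* )^{k\times (n-k)} \mid \mathrm{rk}(A)=1\}$, $\mathcal K:=\left(\ker \mathrm{Tr}_{\mathbb{F}_{q^m}/\mathbb{F}_q}\right)^{k\times(n-k)}$, and $\mathcal G(s):=\{X \in (\mathbb{F}_{q^m}\setminus \mathbb{F}_q)^{k\times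 (n-k)} \mid \mathrm{rk}(X^{(q^s)}-X)=1\}$. *)

(* Defs.v *)
From HB Require Import structures.
From mathcomp Require Import all_boot all_order all_algebra all_field.
Set Implicit Arguments. Unset Strict Implicit. Unset Printing Implicit Defensive.
Import GRing.Theory.
Local Open Scope ring_scope.

(* L plays the role of F_{q^m} (hypothesis #|L| = q^m in the theorem);
   F_q is the subfield {x | x^q = x}. *)
Section Defs.
Variable L : finFieldType.

Definition in_Fq (q : nat) (x : L) : bool := x ^+ q == x.

Definition trace_qm (q m : nat) (a : L) : L := \sum_(i < m) a ^+ (q ^ i).

Variables (k l : nat).

Definition Phi (q s : nat) (X : 'M[L]_(k, l)) : 'M[L]_(k, l) :=
  map_mx (fun x => x ^+ (q ^ s)) X - X.

Definition R1 : {set 'M[L]_(k, l)} := [set A : 'M[L]_(k, l) | \rank A == 1%N].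

Definition R1star : {set 'M[L]_(k, l)} :=
  [set A : 'M[L]_(k, l) | [forall i, forall j, A i j != 0] && (\rank A == 1%N)].

Definition Kset (q m : nat) : {set 'M[L]_(k, l)} :=
  [set A : 'M[L]_(k, l) | [forall i, forall j, trace_qm q m (A i j) == 0]].

Definition Gset (q s : nat) : {set 'M[L]_(k, l)} :=
  [set X : 'M[L]_(k, l) | [forall i, forall j, ~~ in_Fq q (X i j)] && (\rank (Phi q s X) == 1%N)].
End Defs.

Arguments Phi {L k l} q s X.
Arguments R1 L k l.
Arguments R1star L k l.
Arguments Kset L k l q m.
Arguments Gset L k l q s.

(* Main.v *)
From HB Require Import structures.
From mathcomp Require Import all_boot all_order all_algebra all_field.
Require Import Defs.
From mathcomp Require Import ring.
Import GRing.Theory.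
Set Implicit Arguments. Unset Strict Implicit. Unset Printing Implicit Defensive.
Local Open Scope ring_scope.

Lemma frobD (L : finFieldType) (p q : nat) : p \in [pchar L] -> p.-nat q ->
  forall n (x y : L), (x + y) ^+ (q ^ n) = x ^+ (q ^ n) + y ^+ (q ^ n).
Proof.
move=> hp hq n x y; apply: exprDn_pchar.
have hpq : [pchar L].-nat q.
  by apply: sub_in_pnat hq => r _; rewrite inE => /eqP ->.
by rewrite pnatX hpq.
Qed.

Lemma frobB (L : finFieldType) (q : nat) n :
  (forall (x y : L), (x + y) ^+ (q ^ n) = x ^+ (q ^ n) + y ^+ (q ^ n)) ->
  forall x y : L, (x - y) ^+ (q ^ n) = x ^+ (q ^ n) - y ^+ (q ^ n).
Proof.
move=> h x y; apply/eqP; rewrite eq_sym subr_eq -h subrK //.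
Qed.

Lemma frob_inj (L : finFieldType) (q : nat) n : (0 < q)%N ->
  (forall (x y : L), (x + y) ^+ (q ^ n) = x ^+ (q ^ n) + y ^+ (q ^ n)) ->
  forall x y : L, x ^+ (q ^ n) = y ^+ (q ^ n) -> x = y.
Proof.
move=> q0 h x y e; apply/eqP; rewrite -subr_eq0.
have := expf_eq0 (x - y) (q ^ n); rewrite expn_gt0 q0 /= => <-.
by rewrite (frobB h) e subrr.
Qed.

Lemma fix_iter (L : finFieldType) (q t : nat) (x : L) :
  x ^+ (q ^ t) = x -> forall a, x ^+ (q ^ (t * a)) = x.
Proof.
move=> h; elim=> [|a IH]; first by rewrite muln0 expn0 expr1.
by rewrite mulnS expnD exprM h IH.
Qed.

Lemma fix_gcd (L : finFieldType) (q s m : nat) (x : L) : (0 < s)%N -> coprime s m ->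
  x ^+ (q ^ s) = x -> x ^+ (q ^ m) = x -> x ^+ q = x.
Proof.
move=> s0 cop hs hm; case: (egcdnP m s0) => km kn def _.
move: def; rewrite (eqP cop) => def.
have e1 := fix_iter hs km; have e2 := fix_iter hm kn.
by move: e1; rewrite mulnC def addn1 expnSr exprM mulnC e2.
Qed.

Lemma trace_frob (L : finFieldType) (q m : nat) (x : L) : (0 < m)%N ->
  x ^+ (q ^ m) = x -> trace_qm q m (x ^+ q) = trace_qm q m x.
Proof.
move=> m0 hm; rewrite /trace_qm; case: m m0 hm => // m _ hm.
rewrite big_ord_recr big_ord_recl /= -exprM -expnS hm expn0 expr1 addrC.
congr (_ + _); apply: eq_bigr => i _; rewrite -exprM -expnS //.
Qed.

Lemma trace_frobn (L : finFieldType) (q m : nat) (x : L) : (0 < m)%N ->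
  (forall y : L, y ^+ (q ^ m) = y) -> forall s, trace_qm q m (x ^+ (q ^ s)) = trace_qm q m x.
Proof.
move=> m0 hm; elim=> [|s IH]; first by rewrite expn0 expr1.
by rewrite expnSr exprM trace_frob.
Qed.

Lemma traceB (L : finFieldType) (q m : nat) :
  (forall n (x y : L), (x + y) ^+ (q ^ n) = x ^+ (q ^ n) + y ^+ (q ^ n)) ->
  forall x y : L, trace_qm q m (x - y) = trace_qm q m x - trace_qm q m y.
Proof.
move=> h x y; rewrite /trace_qm -sumrB; apply: eq_bigr => i _; exact: frobB.
Qed.

Lemma card_roots_lt (L : finFieldType) (P : {poly L}) (S : {set L}) :
  P != 0 -> (forall x, x \in S -> root P x) -> (#|S| < size P)%N.
Proof.
move=> P0 hS; rewrite cardE; apply: max_poly_roots => //; last exact: enum_uniq.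
by apply/allP => x; rewrite mem_enum => /hS.
Qed.

Lemma size_trP (L : finFieldType) (q : nat) : (1 < q)%N -> forall j,
  size (\sum_(i < j.+1) 'X^(q ^ i) : {poly L}) = (q ^ j).+1.
Proof.
move=> q1; elim=> [|j IH]; first by rewrite big_ord1 expn0 size_polyXn.
rewrite big_ord_recr /= addrC size_polyDl size_polyXn // IH ltnS.
by rewrite ltn_exp2l.
Qed.

Lemma card_kerTr (L : finFieldType) (q m : nat) : (1 < q)%N -> (0 < m)%N ->
  (#|[set x : L | trace_qm q m x == 0%R]| <= q ^ m.-1)%N.
Proof.
move=> q1; case: m => // m _.
have := @card_roots_lt L (\sum_(i < m.+1) 'X^(q ^ i)) [set x : L | trace_qm q m.+1 x == 0].
rewrite (size_trP L q1) ltnS; apply.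
  by rewrite -size_poly_eq0 (size_trP L q1).
move=> x; rewrite inE /root horner_sum.
by under eq_bigr do rewrite hornerXn.
Qed.

Lemma card_Fq (L : finFieldType) (q : nat) : (1 < q)%N ->
  (#|[set x : L | x ^+ q == x]| <= q)%N.
Proof.
move=> q1; have := @card_roots_lt L ('X^q - 'X) [set x : L | x ^+ q == x].
have hs : size ('X^q - 'X : {poly L}) = q.+1.
  by rewrite size_polyDl size_polyXn // size_polyN size_polyX.
rewrite hs ltnS; apply; first by rewrite -size_poly_eq0 hs.
by move=> x; rewrite inE /root !hornerE subr_eq0.
Qed.

Lemma card_preim_const (T U : finType) (g : T -> U) (B : {set U}) (c : nat) :
  (forall y, y \in B -> #|g @^-1: [set y]| = c) -> #|g @^-1: B| = (#|B| * c)%N.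
Proof.
move=> hc; rewrite -sum1_card (partition_big g (mem B)); last by move=> x; rewrite inE.
rewrite -sum_nat_const; apply: eq_bigr => y yB; rewrite -(hc y yB) -sum1_card.
apply: eq_bigl => x; rewrite !inE; case: eqP => [->|]; by rewrite ?yB ?andbF ?andbT.
Qed.

Lemma nat_squeeze (a A Q b q : nat) : (0 < q)%N -> (0 < Q)%N -> (a * b = Q * q)%N ->
  (a <= A)%N -> (A <= Q)%N -> (b <= q)%N -> a = A /\ b = q.
Proof.
move=> q0 Q0 e aA AQ bq.
have h1 : (Q * q <= a * q)%N by rewrite -e leq_mul2l bq orbT.
have h2 : a = Q.
  apply/eqP; rewrite eqn_leq (leq_trans aA AQ) /=.
  by move: h1; rewrite leq_mul2r eqn0Ngt q0.
subst a; split; first by apply/eqP; rewrite eqn_leq aA AQ.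
by apply/eqP; move: e => /eqP; rewrite eqn_mul2l eqn0Ngt Q0.
Qed.

Lemma scalar_main (L : finFieldType) (q m s : nat) :
  (1 < q)%N -> (0 < m)%N -> (0 < s)%N -> coprime s m ->
  (forall n (x y : L), (x + y) ^+ (q ^ n) = x ^+ (q ^ n) + y ^+ (q ^ n)) ->
  #|L| = (q ^ m)%N ->
  [/\ forall x : L, (x ^+ (q ^ s) - x == 0) = (x ^+ q == x),
      forall a : L, (exists x, x ^+ (q ^ s) - x = a) <-> trace_qm q m a = 0 &
      forall a : L, trace_qm q m a = 0 ->
        #|(fun x => x ^+ (q ^ s) - x) @^-1: [set a]| = q].
Proof.
move=> q1 m0 s0 cop hfrob cardL.
have q0 : (0 < q)%N by apply: ltnW.
have hcard : forall y : L, y ^+ (q ^ m) = y by move=> y; rewrite -cardL expf_card.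
pose f := fun x : L => x ^+ (q ^ s) - x.
have fB : forall x y, f (x - y) = f x - f y.
  by move=> x y; rewrite /f (frobB (hfrob s)); ring.
have ker : forall x, (f x == 0) = (x ^+ q == x).
  move=> x; rewrite /f subr_eq0; apply/eqP/eqP => h.
    exact: fix_gcd s0 cop h (hcard x).
  have h1 : x ^+ (q ^ 1) = x by rewrite expn1.
  by have := fix_iter h1 s; rewrite mul1n.
have fib : forall x0, #|f @^-1: [set f x0]| = #|f @^-1: [set 0]|.
  move=> x0; rewrite -[RHS](@card_imset L L (fun d : L => x0 + d) _ (addrI x0)).
  apply: eq_card => x; rewrite !inE; apply/idP/imsetP.
    move=> /eqP h; exists (x - x0); first by rewrite !inE fB h subrr.
    by rewrite addrC subrK.
  case=> d; rewrite !inE => /eqP hd ->; apply/eqP.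
  by apply/eqP; rewrite -subr_eq0 -fB addrC addKr hd.
pose Im := f @: [set: L].
pose Tr0 := [set a : L | trace_qm q m a == 0].
have kerE : f @^-1: [set 0] = [set x : L | x ^+ q == x].
  by apply/setP => x; rewrite !inE ker.
have ImTr : Im \subset Tr0.
  apply/subsetP => a /imsetP [x _ ->]; rewrite inE /f.
  by rewrite (traceB _ hfrob) trace_frobn // subrr.
have cnt : (#|Im| * #|f @^-1: [set 0%R]|)%N = (q ^ m.-1 * q)%N.
  rewrite -expnSr prednK // -cardL -(@card_preim_const L L f).
    by apply: eq_card => x; rewrite !inE imset_f ?inE.
  by move=> y /imsetP [x _ ->]; rewrite fib.
have kq : (#|f @^-1: [set 0%R]| <= q)%N by rewrite kerE card_Fq.
have Q0 : (0 < q ^ m.-1)%N by rewrite expn_gt0 q0.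
have [e1 e2] := nat_squeeze q0 Q0 cnt (subset_leq_card ImTr) (card_kerTr L q1 m0) kq.
have ImE : Im = Tr0.
  apply/eqP; rewrite eqEcard.
  by rewrite ImTr /= e1.
split => //.
  move=> a; split.
    by case=> x <-; have := subsetP ImTr (f x) (imset_f _ (in_setT x)); rewrite inE => /eqP.
  move=> ha; have : a \in Im by rewrite ImE inE ha.
  by case/imsetP => x _ ->; exists x.
move=> a ha; have : a \in Im by rewrite ImE inE ha.
by case/imsetP => x _ ->; rewrite fib.
Qed.

Lemma card_mx_fibers (T : finType) (k l c : nat) (F : 'I_k -> 'I_l -> {set T}) :
  (forall i j, #|F i j| = c) ->
  #|[set X : 'M[T]_(k, l) | [forall i, forall j, X i j \in F i j]]| = (c ^ (k * l))%N.
Proof.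
move=> hc.
have inj : injective (@mx_val T k l) by move=> [a] [b] /= ->.
rewrite -(card_imset _ inj).
have -> : #|[set mx_val X | X in [set X : 'M[T]_(k, l) | [forall i, forall j, X i j \in F i j]]]|
   = #|family (fun ij : 'I_k * 'I_l => mem (F ij.1 ij.2))|.
  apply: eq_card => g; apply/imsetP/familyP.
    case=> X; rewrite inE => /forallP h -> [i j] /=.
    by have /forallP := h i; move=> /(_ j).
  move=> h; exists (Matrix g) => //; rewrite inE; apply/forallP => i; apply/forallP => j.
  exact: (h (i, j)).
rewrite card_family /image_mem.
under eq_map => x do rewrite hc.
have fe : forall (U : Type) (e : seq U), foldr muln 1%N [seq c | _ <- e] = (c ^ size e)%N.
  by move=> U; elim=> //= _ e ->; rewrite expnS.
by rewrite fe -cardT card_prod !card_ord.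
Qed.

Lemma mat_main (L : finFieldType) (q m k l s : nat) :
  (1 < q)%N -> (0 < m)%N -> (0 < s)%N -> coprime s m ->
  (forall n (x y : L), (x + y) ^+ (q ^ n) = x ^+ (q ^ n) + y ^+ (q ^ n)) ->
  #|L| = (q ^ m)%N ->
  [/\ (forall A : 'M[L]_(k, l),
        (exists X : 'M[L]_(k, l), Phi q s X = A) <-> A \in Kset L k l q m),
      (forall A : 'M[L]_(k, l), A \notin Kset L k l q m -> #|Phi q s @^-1: [set A]| = 0%N),
      (forall A : 'M[L]_(k, l), A \in Kset L k l q m -> #|Phi q s @^-1: [set A]| = (q ^ (k * l))%N),
      Gset L k l q s = Phi q s @^-1: (R1star L k l :&: Kset L k l q m) &
      #|Gset L k l q s| = (q ^ (k * l) * #|R1star L k l :&: Kset L k l q m|)%N].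
Proof.
move=> q1 m0 s0 cop hfrob cardL.
have [ker im fib] := scalar_main q1 m0 s0 cop hfrob cardL.
have PhiE : forall (X : 'M[L]_(k, l)) i j, Phi q s X i j = X i j ^+ (q ^ s) - X i j.
  by move=> X i j; rewrite /Phi !mxE.
have part1 : forall A : 'M[L]_(k, l),
    (exists X : 'M[L]_(k, l), Phi q s X = A) <-> A \in Kset L k l q m.
  move=> A; split.
    case=> X <-; rewrite inE; apply/forallP=> i; apply/forallP=> j; rewrite PhiE.
    by apply/eqP; apply/(im _).1; exists (X i j).
  rewrite inE => /forallP hA.
  pose g a := odflt 0 [pick x : L | x ^+ (q ^ s) - x == a].
  exists (\matrix_(i, j) g (A i j)); apply/matrixP => i j; rewrite PhiE mxE /g.
  case: pickP => [x /eqP //| none].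
  have := hA i; move/forallP/(_ j)/eqP => /(im _).2 [x hx].
  by have := none x; rewrite hx eqxx.
have part2b : forall A : 'M[L]_(k, l), A \in Kset L k l q m ->
    #|Phi q s @^-1: [set A]| = (q ^ (k * l))%N.
  move=> A hA.
  rewrite -(@card_mx_fibers L k l q (fun i j => (fun x : L => x ^+ (q ^ s) - x) @^-1: [set A i j])).
    apply: eq_card => X; rewrite !inE; apply/eqP/forallP => [h i|h].
      by apply/forallP=> j; rewrite !inE -h PhiE.
    apply/matrixP => i j; have := h i; move/forallP/(_ j); rewrite !inE PhiE => /eqP //.
  move=> i j; apply: fib; move: hA; rewrite inE => /forallP/(_ i)/forallP/(_ j)/eqP //.
have GE : Gset L k l q s = Phi q s @^-1: (R1star L k l :&: Kset L k l q m).
  apply/setP => X; rewrite !inE.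
  have -> : [forall i, forall j, trace_qm q m (Phi q s X i j) == 0] = true.
    by have := (part1 (Phi q s X)).1 (ex_intro _ X erefl); rewrite inE.
  rewrite andbT; congr (_ && _).
  apply: eq_forallb => i; apply: eq_forallb => j; by rewrite PhiE ker.
split => //.
  move=> A hA; apply: eq_card0 => X; rewrite !inE; apply/negbTE/negP => /eqP h.
  by move/negP: hA; apply; apply/(part1 A).1; exists X.
rewrite GE mulnC; apply: card_preim_const.
by move=> y; rewrite inE => /andP [_ hy]; apply: part2b.
Qed.

Theorem lemma4p8 (L : finFieldType) (q m k n s : nat) :
  (exists p e : nat, [/\ prime p, (0 < e)%N & q = (p ^ e)%N]) ->
  #|L| = (q ^ m)%N ->
  (2 <= m)%N -> (1 <= k)%N -> (k < n)%N ->
  (0 < s)%N -> (s < m)%N -> coprime s m ->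
  (* (1) *)
  (forall A : 'M[L]_(k, n - k),
     (exists X : 'M[L]_(k, n - k), Phi q s X = A) <-> A \in Kset L k (n - k) q m)
  /\
  (* (2) *)
  (forall A : 'M[L]_(k, n - k), A \in R1 L k (n - k) ->
     (A \notin Kset L k (n - k) q m -> #|Phi q s @^-1: [set A]| = 0%N) /\
     (A \in Kset L k (n - k) q m -> #|Phi q s @^-1: [set A]| = (q ^ (k * (n - k)))%N))
  /\
  (* (3) *)
  [/\ Gset L k (n - k) q s = Phi q s @^-1: (R1star L k (n - k) :&: Kset L k (n - k) q m),
      #|Gset L k (n - k) q 1| = #|Gset L k (n - k) q s|
    & #|Gset L k (n - k) q s| =
        (q ^ (k * (n - k)) * #|R1star L k (n - k) :&: Kset L k (n - k) q m|)%N].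
Proof.
move=> [p [e [pp e0 qe]]] cardL m2 k1 kn s0 sm cop.
have q1 : (1 < q)%N by rewrite qe -{1}(expn0 p) ltn_exp2l ?prime_gt1.
have m0 : (0 < m)%N by apply: leq_trans m2.
have hp : p \in [pchar L].
  by apply: (@card_finPcharP L p (e * m)) => //; rewrite cardL qe -expnM.
have hpq : p.-nat q by rewrite qe pnatX pnat_id.
have hfrob := frobD hp hpq.
have [P1 P2a P2b P3 P4] := mat_main k (n - k) q1 m0 s0 cop hfrob cardL.
have [_ _ _ _ Q4] := @mat_main L q m k (n - k) 1 q1 m0 isT (coprime1n m) hfrob cardL.
split => //; split.
  by move=> A _; split; [apply: P2a | apply: P2b].
by split => //; rewrite Q4 P4.
Qed.
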